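(* Let $G=(V,E,\Omega)$ be a connected finite graph with vertex set $V\subset\mathbb{R}^n$, edge set $E$ and a non-empty set $\Omega\subset V$, and let $f:\Omega\to\mathbb{R}^m$. If $u$ is a tight extension of $f$ on $G$, then $u$ is a Kirszbraun extension of $f$ on $G$, i.e. $u(x)=K(u,S(x))(x)$ for all $x\in V\setminus\Omega$ and $u(x)=f(x)$ for all $x\in\Omega$.
   Context: For $x\in V$, $S(x):=\{y\in V:(x,y)\in E\}$. $E(f)$ denotes the set of functions $V\to\mathbb{R}^m$ agreeing with $f$ on $\Omega$; $\|\cdot\|$ is the Euclidean norm. For a finite set $A\subset\mathbb{R}^n$, $g:A\to\mathbb{R}^m$ and $x\in\mathbb{R}^n\setminus A$, $K(g,A)(x)$ denotes the unique $y\in\mathbb{R}^m$ minimizing $\sup_{a\in A}\|g(a)-y\|/\|a-x\|$. For $w\in E(f)$ and $x\in V\setminus\Omega$, $Lw(x):=\sup_{y\in S(x)}\|w(y)-w(x)\|/\|y-x\|$. For $u,v\in E(f)$, $v$ is tighter than $u$ if $\max\{Lu(x):Lu(x)>Lv(x),\,x\in V\setminus\Omega\}>\max\{Lv(x):Lv(x)>Lu(x),\,x\in V\setminus\Omega\}$ (maximum over the empty set is $0$). An extension $u\in E(f)$ is a tight extension of $f$ on $G$ if no $v\in E(f)$ is tighter than $u$. *)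

(* Defs.v *)
From HB Require Import structures.
From mathcomp Require Import all_boot all_order all_algebra.
From mathcomp Require Import finmap.
From mathcomp Require Import reals.
From Stdlib Require Import ClassicalEpsilon.
Set Implicit Arguments. Unset Strict Implicit. Unset Printing Implicit Defensive.
Import Order.TTheory GRing.Theory Num.Theory.
Local Open Scope ring_scope.
Local Open Scope fset_scope.

Section Defs.
Variable R : realType.

Definition enorm (k : nat) (v : 'rV[R]_k) : R :=
  Num.sqrt (\sum_(i < k) (v ord0 i) ^+ 2).

Variables n m : nat.
Notation pt := 'rV[R]_n.
Notation val := 'rV[R]_m.

Definition nbhd (V : {fset pt}) (E : {fset pt * pt}) (x : pt) : {fset pt} :=
  [fset y in V | (x, y) \in E].

Definition is_graph (V : {fset pt}) (E : {fset pt * pt}) (Om : {fset pt}) : Prop :=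
  [/\ (forall p, p \in E -> (p.1 \in V) && (p.2 \in V)),
      (forall x y, (x, y) \in E -> (y, x) \in E),
      (forall x, (x, x) \notin E) &
      Om `<=` V].

Definition connected_graph (V : {fset pt}) (E : {fset pt * pt}) : Prop :=
  forall x y, x \in V -> y \in V ->
    exists p : seq pt, path (fun a b => (a, b) \in E) x p /\ last x p = y.

Definition ext_of (Om : {fset pt}) (f w : pt -> val) : Prop :=
  forall x, x \in Om -> w x = f x.

Definition Lip (V : {fset pt}) (E : {fset pt * pt}) (w : pt -> val) (x : pt) : R :=
  \big[Num.max/0]_(y <- nbhd V E x) (enorm (w y - w x) / enorm (y - x)).

Definition tighter (V : {fset pt}) (E : {fset pt * pt}) (Om : {fset pt})
    (v u : pt -> val) : Prop :=
  \big[Num.max/0]_(x <- V `\` Om | Lip V E v x < Lip V E u x) Lip V E u x >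
  \big[Num.max/0]_(x <- V `\` Om | Lip V E u x < Lip V E v x) Lip V E v x.

Definition tight_ext (V : {fset pt}) (E : {fset pt * pt}) (Om : {fset pt})
    (f u : pt -> val) : Prop :=
  ext_of Om f u /\ ~ exists v, ext_of Om f v /\ tighter V E Om v u.

Definition Kobj (g : pt -> val) (A : {fset pt}) (x : pt) (y : val) : R :=
  \big[Num.max/0]_(a <- A) (enorm (g a - y) / enorm (a - x)).

Definition Kirsz (g : pt -> val) (A : {fset pt}) (x : pt) : val :=
  epsilon (inhabits 0) (fun y => forall z, Kobj g A x y <= Kobj g A x z).

End Defs.

(* Main.v *)
Require Import Defs.
From HB Require Import structures.
From mathcomp Require Import all_boot all_order all_algebra.
From mathcomp Require Import finmap.
From mathcomp Require Import reals.
From Stdlib Require Import ClassicalEpsilon Classical.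
From mathcomp Require Import ring lra.
Set Implicit Arguments. Unset Strict Implicit. Unset Printing Implicit Defensive.
Import Order.TTheory GRing.Theory Num.Theory.
Local Open Scope ring_scope.
Local Open Scope fset_scope.

Section Aux.
Variable R : realType.

Definition sq k (v : 'rV[R]_k) : R := \sum_(i < k) (v ord0 i) ^+ 2.

Lemma sq_ge0 k (v : 'rV[R]_k) : 0 <= sq v.
Proof. by apply: sumr_ge0 => i _; apply: sqr_ge0. Qed.

Lemma enormE k (v : 'rV[R]_k) : enorm v = Num.sqrt (sq v).
Proof. by []. Qed.

Lemma enorm_ge0 k (v : 'rV[R]_k) : 0 <= enorm v.
Proof. exact: sqrtr_ge0. Qed.

Lemma enorm_sq k (v : 'rV[R]_k) : enorm v ^+ 2 = sq v.
Proof. by rewrite enormE sqr_sqrtr // sq_ge0. Qed.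

Lemma enormN k (v : 'rV[R]_k) : enorm (- v) = enorm v.
Proof.
rewrite /enorm; congr Num.sqrt; apply: eq_bigr => i _.
by rewrite mxE sqrrN.
Qed.

Lemma enormB k (a b : 'rV[R]_k) : enorm (a - b) = enorm (b - a).
Proof. by rewrite -opprB enormN. Qed.

Lemma sq_gt0 k (v : 'rV[R]_k) : v != 0 -> 0 < sq v.
Proof.
move=> nz; rewrite lt_def sq_ge0 andbT; apply/negP => /eqP H.
move/eqP: nz; apply; apply/matrixP => i j.
rewrite (ord1 i) mxE.
have /psumr_eq0P H2 : \sum_(j < k) (v ord0 j) ^+ 2 = 0 by [].
have := H2 (fun j _ => sqr_ge0 _) j isT.
by move/eqP; rewrite sqrf_eq0 => /eqP.
Qed.

Lemma enorm_gt0 k (v : 'rV[R]_k) : v != 0 -> 0 < enorm v.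
Proof. by move=> nz; rewrite enormE sqrtr_gt0 sq_gt0. Qed.

Lemma sq_mid k (p y1 y2 : 'rV[R]_k) :
  sq (p - 2^-1 *: (y1 + y2)) =
  (sq (p - y1) + sq (p - y2)) / 2 - sq (y1 - y2) / 4.
Proof.
rewrite /sq.
transitivity (\sum_(i < k) (((p - y1) ord0 i) ^+ 2 / 2 +
   ((p - y2) ord0 i) ^+ 2 / 2 - ((y1 - y2) ord0 i) ^+ 2 / 4)).
  by apply: eq_bigr => i _; rewrite !mxE; field.
by rewrite sumrB big_split /= -!mulr_suml mulrDl.
Qed.


Variables n m : nat.

Lemma Kobj_ge0 (g : 'rV[R]_n -> 'rV[R]_m) A x y : 0 <= Kobj g A x y.
Proof. exact: bigmax_ge_id. Qed.

Lemma Kobj_uniq (g : 'rV[R]_n -> 'rV[R]_m) (A : {fset 'rV[R]_n}) x a0 y1 y2 :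
  a0 \in A -> (forall a, a \in A -> a != x) ->
  (forall z, Kobj g A x y1 <= Kobj g A x z) ->
  (forall z, Kobj g A x y2 <= Kobj g A x z) -> y1 = y2.
Proof.
move=> a0A nx m1 m2.
apply/eqP/negPn/negP => ne.
set c := Kobj g A x y1.
have c2 : Kobj g A x y2 = c by apply/eqP; rewrite eq_le m2 m1.
set mid := 2^-1 *: (y1 + y2).
have c0 : 0 <= c by exact: Kobj_ge0.
have key : forall a, a \in A -> enorm (g a - mid) < c * enorm (a - x).
  move=> a aA.
  have da : 0 < enorm (a - x) by apply: enorm_gt0; rewrite subr_eq0 nx.
  have h1 : enorm (g a - y1) <= c * enorm (a - x).
    rewrite -ler_pdivrMr //; apply: (le_bigmax_seq 0 a xpredT (fun a => enorm (g a - y1) / enorm (a - x)) aA isT).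
  have h2 : enorm (g a - y2) <= c * enorm (a - x).
    rewrite -ler_pdivrMr // -c2; apply: (le_bigmax_seq 0 a xpredT (fun a => enorm (g a - y2) / enorm (a - x)) aA isT).
  have s12 : 0 < sq (y1 - y2) by apply: sq_gt0; rewrite subr_eq0.
  have e1 := enorm_sq (g a - y1). have e2 := enorm_sq (g a - y2).
  have em := enorm_sq (g a - mid).
  have hm := sq_mid (g a) y1 y2.
  have n1 := enorm_ge0 (g a - y1). have n2 := enorm_ge0 (g a - y2).
  have nm := enorm_ge0 (g a - mid).
  have cd : 0 <= c * enorm (a - x) by apply: mulr_ge0 => //; apply: ltW.
  have q1 : sq (g a - y1) <= (c * enorm (a - x)) ^+ 2 by rewrite -e1; nra.
  have q2 : sq (g a - y2) <= (c * enorm (a - x)) ^+ 2 by rewrite -e2; nra.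
  have qm : enorm (g a - mid) ^+ 2 < (c * enorm (a - x)) ^+ 2.
    rewrite em /mid hm; lra.
  nra.
have da0 : 0 < enorm (a0 - x) by apply: enorm_gt0; rewrite subr_eq0 nx.
have cpos : 0 < c.
  have := key a0 a0A; have := enorm_ge0 (g a0 - mid); nra.
have : Kobj g A x mid < c.
  rewrite /Kobj big_seq; apply: bigmax_lt => // a aA.
  have da : 0 < enorm (a - x) by apply: enorm_gt0; rewrite subr_eq0 nx.
  by rewrite ltr_pdivrMr // key.
by rewrite ltNge m1.
Qed.

End Aux.

Theorem mainTheorem2 (R : realType) (n m : nat)
    (V : {fset 'rV[R]_n}) (E : {fset 'rV[R]_n * 'rV[R]_n}) (Om : {fset 'rV[R]_n})
    (f u : 'rV[R]_n -> 'rV[R]_m) :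
  is_graph V E Om -> connected_graph V E -> Om != fset0 ->
  tight_ext V E Om f u ->
  (forall x, x \in V `\` Om -> u x = Kirsz u (nbhd V E x) x) /\
  (forall x, x \in Om -> u x = f x).
Proof.
move=> [EV Esym Eirr OmV] conn Om0 [ext nt]; split; last exact: ext.
move=> x xVO.
have /andP [xnO xV] : (x \notin Om) && (x \in V) by move: xVO; rewrite inE.
have /fset0Pn [o oOm] := Om0.
have oV : o \in V by exact: (fsubsetP OmV).
have [p [pp lp]] := conn x o xV oV.
case: p pp lp => [|a p] /=.
  by move=> _ xo; move: xnO; rewrite xo oOm.
move=> /andP [xaE _] _.
set N := nbhd V E x.
have inN : forall y, (y \in N) = (y \in V) && ((x, y) \in E).
  by move=> y; rewrite /N /nbhd inE.
have aN : a \in N by rewrite inN xaE andbT; have /andP [] := EV _ xaE.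
have Nx : forall y, y \in N -> y != x.
  move=> y; rewrite inN => /andP [_ H]; apply/eqP => yx; move: H; rewrite yx.
  by rewrite (negbTE (Eirr x)).
case: (classic (forall z, Kobj u N x (u x) <= Kobj u N x z)) => [H|H].
  rewrite /Kirsz; apply: (Kobj_uniq aN Nx H).
  apply: (epsilon_spec (inhabits 0) (fun y => forall z, Kobj u N x y <= Kobj u N x z)).
  by exists (u x).
exfalso; have [z Hz] := not_all_ex_not _ _ H.
have zlt : Kobj u N x z < Kobj u N x (u x) by rewrite ltNge; apply/negP.
apply: nt.
pose v := fun w => if w == x then z else u w.
exists v; split.
  move=> w wO; rewrite /v; case: eqP => [wx|_]; last exact: ext.
  by move: xnO; rewrite -wx wO.
have Lipvx : Lip V E v x = Kobj u N x z.
  rewrite /Lip /Kobj; apply: eq_big_seq => y yN.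
  by rewrite /v eqxx (negbTE (Nx y yN)).
have Lipux : Lip V E u x = Kobj u N x (u x) by [].
have Lip0 : forall (w : 'rV[R]_n -> 'rV[R]_m) y, 0 <= Lip V E w y by move=> w y; exact: bigmax_ge_id.
have lv : Lip V E v x < Lip V E u x by rewrite Lipvx Lipux.
have bound : forall w, w != x -> Lip V E v w <= Num.max (Lip V E u w) (Lip V E v x).
  move=> w wx; rewrite /Lip big_seq; apply: bigmax_le.
    by rewrite le_max Lip0.
  move=> y yN; rewrite le_max; rewrite /v (negbTE wx).
  case: eqP => [yx|/eqP yx].
    apply/orP; right; rewrite -/(Lip V E v x) Lipvx /Kobj.
    have wN : w \in N.
      move: yN; rewrite /nbhd inE => /andP [_ wyE]; rewrite inN.
      have wxE : (x, w) \in E by apply: Esym; rewrite -yx.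
      by rewrite wxE andbT; have /andP [] := EV _ wxE.
    rewrite yx enormB (enormB x).
    exact: (le_bigmax_seq 0 w xpredT (fun a => enorm (u a - z) / enorm (a - x)) wN isT).
  apply/orP; left.
  exact: (le_bigmax_seq 0 y xpredT (fun y => enorm (u y - u w) / enorm (y - w)) yN isT).
rewrite /tighter.
apply: (le_lt_trans _ (lt_le_trans lv _)).
  rewrite big_seq_cond; apply: bigmax_le => //.
  move=> w /andP [wVO lt].
  case: (eqVneq w x) => [wx|wx].
    by move: lt; rewrite wx ltNge (ltW lv).
  have := bound w wx; rewrite le_max => /orP [H1|//].
  by move: lt; rewrite ltNge H1.
have := le_bigmax_seq 0 x (fun w => Lip V E v w < Lip V E u w) (fun w => Lip V E u w) xVO lv.
move=> HH; exact: HH.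
Qed.
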